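(* Let $\mathcal E$ be an environment and $t_0,t_1$ closed terms with $t_0\approx_{\mathcal E}t_1$. Then for every closed evaluation context $F$, $F[t_0]\approx_{\mathcal E}F[t_1]$.
   Context: Terms of $\lambda_S$: $t ::= x \mid \lambda x.t \mid t\,t \mid \mathcal{S}k.t \mid \langle t\rangle$ (shift binds $k$; $\langle\cdot\rangle$ reset), up to $\alpha$-conversion. Values $v::=\lambda x.t$. Pure contexts $E ::= \Box \mid v\,E \mid E\,t$; evaluation contexts $F ::= \Box \mid v\,F \mid F\,t \mid \langle F\rangle$. Reduction: $F[(\lambda x.t)v]\to F[t\{v/x\}]$; $F[\langle E[\mathcal Sk.t]\rangle]\to F[\langle t\{\lambda x.\langle E[x]\rangle/k\}\rangle]$ ($x\notin\mathrm{fv}(E)$); $F[\langle v\rangle]\to F[v]$; $\to^*$ reflexive-transitive closure. Stuck term: not a value and irreducible; normal form: value or stuck term. Closures: for $R$ a relation on closed terms, $\widetilde R$ is the smallest relation containing $R$, all $(x,x)$, closed under all term constructors, restricted to closed terms; $\widehat R$ is the smallest relation on closed evaluation contexts with $\Box\widehat R\Box$, $v_0F_0\widehat Rv_1F_1$ if $F_0\widehat RF_1,v_0\widetilde Rv_1$; $F_0t_0\widehat RF_1t_1$ if $F_0\widehat RF_1,t_0\widetilde Rt_1$; $\langle F_0\rangle\widehat R\langle F_1\rangle$ if $F_0\widehat RF_1$. Environmental bisimilarity: an environment $\mathcal E$ is a relation on closed normal forms relating values only with values and stuck terms only with stuck terms; an environmental relation $\mathcal X$ is a set of environments and triples $(\mathcal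 E,t_0,t_1)$ with $t_0,t_1$ closed, written $t_0\mathcal X_{\mathcal E}t_1$. $\mathcal X$ is an environmental bisimulation if (1) whenever $t_0\mathcal X_{\mathcal E}t_1$: (a) $t_0\to t_0'$ implies $t_1\to^*t_1'$ with $t_0'\mathcal X_{\mathcal E}t_1'$; (b) if $t_0$ is a value $v_0$ then $t_1\to^*v_1$, a value, with $\mathcal E\cup\{(v_0,v_1)\}\in\mathcal X$; (c) if $t_0$ is stuck then $t_1\to^*t_1'$ stuck with $\mathcal E\cup\{(t_0,t_1')\}\in\mathcal X$; (d) symmetric conditions for $t_1$; (2) whenever $\mathcal E\in\mathcal X$: (a) $(\lambda x.t_0)\mathcal E(\lambda x.t_1)$ and $v_0\widetilde{\mathcal E}v_1$ imply $t_0\{v_0/x\}\mathcal X_{\mathcal E}t_1\{v_1/x\}$; (b) $E_0[\mathcal Sk.t_0]\mathcal EE_1[\mathcal Sk.t_1]$ and pure $E_0'\widehat{\mathcal E}E_1'$ imply $\langle t_0\{\lambda x.\langle E_0'[E_0[x]]\rangle/k\}\rangle\mathcal X_{\mathcal E}\langle t_1\{\lambda x.\langle E_1'[E_1[x]]\rangle/k\}\rangle$, $x$ fresh. $\approx$ is the largest environmental bisimulation; $t_0\approx_{\mathcal E}t_1$ means $(\mathcal E,t_0,t_1)\in\approx$. *)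

(* Defs.v *)
(* Lambda-calculus with shift/reset (lambda_S), de Bruijn syntax
   (terms are thus identified up to alpha-conversion). *)
From Stdlib Require Import Arith.

Inductive term : Type :=
| Var : nat -> term
| Lam : term -> term
| App : term -> term -> term
| Shift : term -> term        (* S k.t, k is index 0 in the body *)
| Reset : term -> term.

Fixpoint lift (d c : nat) (t : term) : term :=
  match t with
  | Var n => if c <=? n then Var (n + d) else Var n
  | Lam b => Lam (lift d (S c) b)
  | App a b => App (lift d c a) (lift d c b)
  | Shift b => Shift (lift d (S c) b)
  | Reset b => Reset (lift d c b)
  end.

Fixpoint subst_at (k : nat) (s : term) (t : term) : term :=
  match t with
  | Var n => if n =? k then lift k 0 s
             else if k <? n then Var (n - 1) else Var n
  | Lam b => Lam (subst_at (S k) s b)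
  | App a b => App (subst_at k s a) (subst_at k s b)
  | Shift b => Shift (subst_at (S k) s b)
  | Reset b => Reset (subst_at k s b)
  end.

Definition subst0 (s t : term) : term := subst_at 0 s t.

Fixpoint closed_at (n : nat) (t : term) : Prop :=
  match t with
  | Var m => m < n
  | Lam b => closed_at (S n) b
  | App a b => closed_at n a /\ closed_at n b
  | Shift b => closed_at (S n) b
  | Reset b => closed_at n b
  end.

Definition closed (t : term) : Prop := closed_at 0 t.

Definition is_value (t : term) : Prop := exists b, t = Lam b.

(* Contexts. Evaluation contexts F ::= [] | v F | F t | <F>,
   where v F with v = \x.b is represented as CVal b F.
   Pure contexts are those without CReset. *)
Inductive ctx : Type :=
| Hole : ctx
| CVal : term -> ctx -> ctx
| CFun : ctx -> term -> ctx
| CReset : ctx -> ctx.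

Fixpoint plug (C : ctx) (t : term) : term :=
  match C with
  | Hole => t
  | CVal b C' => App (Lam b) (plug C' t)
  | CFun C' u => App (plug C' t) u
  | CReset C' => Reset (plug C' t)
  end.

Fixpoint pure (C : ctx) : Prop :=
  match C with
  | Hole => True
  | CVal _ C' => pure C'
  | CFun C' _ => pure C'
  | CReset _ => False
  end.

Fixpoint lift_ctx (d c : nat) (C : ctx) : ctx :=
  match C with
  | Hole => Hole
  | CVal b C' => CVal (lift d (S c) b) (lift_ctx d c C')
  | CFun C' u => CFun (lift_ctx d c C') (lift d c u)
  | CReset C' => CReset (lift_ctx d c C')
  end.

Fixpoint closed_ctx (C : ctx) : Prop :=
  match C with
  | Hole => True
  | CVal b C' => closed (Lam b) /\ closed_ctx C'
  | CFun C' u => closed_ctx C' /\ closed u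
  | CReset C' => closed_ctx C'
  end.

(* the continuation \x.<E[x]> (x fresh) *)
Definition cont (E : ctx) : term := Lam (Reset (plug (lift_ctx 1 0 E) (Var 0))).

Definition cont2 (E' E : ctx) : term :=
  Lam (Reset (plug (lift_ctx 1 0 E') (plug (lift_ctx 1 0 E) (Var 0)))).

Inductive step : term -> term -> Prop :=
| step_beta : forall F b v, is_value v ->
    step (plug F (App (Lam b) v)) (plug F (subst0 v b))
| step_shift : forall F E t, pure E ->
    step (plug F (Reset (plug E (Shift t)))) (plug F (Reset (subst0 (cont E) t)))
| step_reset : forall F v, is_value v ->
    step (plug F (Reset v)) (plug F v).

Inductive steps : term -> term -> Prop :=
| steps_refl : forall t, steps t t
| steps_step : forall t u w, step t u -> steps u w -> steps t w.

Definition stuck (t : term) : Prop := ~ is_value t /\ forall u, ~ step t u.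

Definition normal_form (t : term) : Prop := is_value t \/ stuck t.

Definition rel := term -> term -> Prop.

Inductive tilde_open (R : rel) : term -> term -> Prop :=
| to_base : forall a b, R a b -> tilde_open R a b
| to_var : forall n, tilde_open R (Var n) (Var n)
| to_lam : forall a b, tilde_open R a b -> tilde_open R (Lam a) (Lam b)
| to_app : forall a a' b b', tilde_open R a b -> tilde_open R a' b' ->
    tilde_open R (App a a') (App b b')
| to_shift : forall a b, tilde_open R a b -> tilde_open R (Shift a) (Shift b)
| to_reset : forall a b, tilde_open R a b -> tilde_open R (Reset a) (Reset b).

Definition tilde (R : rel) (a b : term) : Prop :=
  tilde_open R a b /\ closed a /\ closed b.

Inductive hat (R : rel) : ctx -> ctx -> Prop :=
| hat_hole : hat R Hole Hole
| hat_val : forall b0 b1 F0 F1, hat R F0 F1 -> tilde R (Lam b0) (Lam b1) ->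
    hat R (CVal b0 F0) (CVal b1 F1)
| hat_fun : forall F0 F1 t0 t1, hat R F0 F1 -> tilde R t0 t1 ->
    hat R (CFun F0 t0) (CFun F1 t1)
| hat_reset : forall F0 F1, hat R F0 F1 -> hat R (CReset F0) (CReset F1).

Definition is_env (E : rel) : Prop :=
  forall a b, E a b ->
    closed a /\ closed b /\ normal_form a /\ normal_form b /\
    ((is_value a /\ is_value b) \/ (stuck a /\ stuck b)).

Definition env_add (E : rel) (a b : term) : rel :=
  fun x y => E x y \/ (x = a /\ y = b).

Record env_relation : Type := {
  X_env : rel -> Prop;
  X_tri : rel -> term -> term -> Prop
}.

Definition is_env_relation (X : env_relation) : Prop :=
  (forall E, X_env X E -> is_env E) /\
  (forall E t0 t1, X_tri X E t0 t1 -> is_env E /\ closed t0 /\ closed t1).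

Definition env_bisimulation (X : env_relation) : Prop :=
  is_env_relation X /\
  (forall E t0 t1, X_tri X E t0 t1 ->
     (forall t0', step t0 t0' -> exists t1', steps t1 t1' /\ X_tri X E t0' t1') /\
     (is_value t0 -> exists v1, steps t1 v1 /\ is_value v1 /\ X_env X (env_add E t0 v1)) /\
     (stuck t0 -> exists t1', steps t1 t1' /\ stuck t1' /\ X_env X (env_add E t0 t1')) /\
     (forall t1', step t1 t1' -> exists t0', steps t0 t0' /\ X_tri X E t0' t1') /\
     (is_value t1 -> exists v0, steps t0 v0 /\ is_value v0 /\ X_env X (env_add E v0 t1)) /\
     (stuck t1 -> exists t0', steps t0 t0' /\ stuck t0' /\ X_env X (env_add E t0' t1))) /\
  (* (2) *)
  (forall E, X_env X E ->
     (* (a) *)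
     (forall b0 b1 v0 v1, E (Lam b0) (Lam b1) -> is_value v0 -> is_value v1 ->
        tilde E v0 v1 -> X_tri X E (subst0 v0 b0) (subst0 v1 b1)) /\
     (* (b) *)
     (forall E0 E1 s0 s1 E0' E1', pure E0 -> pure E1 ->
        E (plug E0 (Shift s0)) (plug E1 (Shift s1)) ->
        pure E0' -> pure E1' -> hat E E0' E1' ->
        X_tri X E (Reset (subst0 (cont2 E0' E0) s0))
                  (Reset (subst0 (cont2 E1' E1) s1)))).

(* environmental bisimilarity: the largest environmental bisimulation,
   i.e. the union of all environmental bisimulations *)
Definition bisimilar (E : rel) (t0 t1 : term) : Prop :=
  exists X, env_bisimulation X /\ X_tri X E t0 t1.

(* Main.v *)
Require Import Defs.
From Stdlib Require Import Arith Lia FunctionalExtensionality PropExtensionality.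

Fixpoint comp (A B : ctx) : ctx :=
  match A with
  | Hole => B
  | CVal b A' => CVal b (comp A' B)
  | CFun A' u => CFun (comp A' B) u
  | CReset A' => CReset (comp A' B)
  end.

Lemma plug_comp A B x : plug (comp A B) x = plug A (plug B x).
Proof. induction A; simpl; congruence. Qed.

Lemma comp_hole_r A : comp A Hole = A.
Proof. induction A; simpl; congruence. Qed.

Lemma lift_ctx_comp d c A B : lift_ctx d c (comp A B) = comp (lift_ctx d c A) (lift_ctx d c B).
Proof. induction A; simpl; congruence. Qed.

Lemma pure_comp A B : pure (comp A B) <-> pure A /\ pure B.
Proof. induction A; simpl; tauto. Qed.

Lemma closed_ctx_comp A B : closed_ctx (comp A B) <-> closed_ctx A /\ closed_ctx B.
Proof. induction A; simpl; tauto. Qed.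

Lemma closed_at_mono t : forall n m, closed_at n t -> n <= m -> closed_at m t.
Proof.
  induction t; simpl; intros; try lia; try (destruct H; split); eauto;
  eapply IHt; eauto; lia.
Qed.

Lemma lift_closed t : forall n d c, closed_at n t -> n <= c -> lift d c t = t.
Proof.
  induction t; simpl; intros.
  - destruct (Nat.leb_spec c n); [lia|reflexivity].
  - rewrite (IHt (S n)); auto; lia.
  - destruct H; rewrite (IHt1 n), (IHt2 n); auto.
  - rewrite (IHt (S n)); auto; lia.
  - rewrite (IHt n); auto.
Qed.

Lemma subst_closed t : forall n k s, closed_at n t -> n <= k -> subst_at k s t = t.
Proof.
  induction t; simpl; intros.
  - destruct (Nat.eqb_spec n k); [lia|]. destruct (Nat.ltb_spec k n); [lia|reflexivity].
  - rewrite (IHt (S n)); auto; lia.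
  - destruct H; rewrite (IHt1 n), (IHt2 n); auto.
  - rewrite (IHt (S n)); auto; lia.
  - rewrite (IHt n); auto.
Qed.

Lemma lift_ctx_closed E d c : closed_ctx E -> lift_ctx d c E = E.
Proof.
  induction E; simpl; intros; auto.
  - destruct H. unfold closed in H; simpl in H.
    rewrite (lift_closed t 1); auto; [|lia]. rewrite IHE; auto.
  - destruct H. rewrite IHE, (lift_closed t 0); auto; lia.
  - rewrite IHE; auto.
Qed.

Lemma closed_plug0 F x : closed (plug F x) <-> closed_ctx F /\ closed x.
Proof.
  induction F; unfold closed in *; simpl in *; try tauto.
Qed.

Lemma closed_plug_n F x n : closed_ctx F -> closed_at n x -> closed_at n (plug F x).
Proof.
  induction F; simpl; intros; auto.
  - destruct H; unfold closed in H; simpl in H. split; auto.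
    eapply closed_at_mono; eauto; lia.
  - destruct H; split; auto. eapply closed_at_mono; eauto; lia.
Qed.

Lemma closed_subst t : forall n k s, closed_at (S n) t -> k <= n -> closed s ->
  closed_at n (subst_at k s t).
Proof.
  induction t; simpl; intros.
  - destruct (Nat.eqb_spec n k).
    + rewrite (lift_closed s 0 k 0 H1 (le_n 0)). eapply closed_at_mono; eauto; lia.
    + destruct (Nat.ltb_spec k n); simpl; lia.
  - apply IHt; auto; lia.
  - destruct H; split; auto.
  - apply IHt; auto; lia.
  - apply IHt; auto.
Qed.

Lemma closed_subst0 b v : closed (Lam b) -> closed v -> closed (subst0 v b).
Proof. unfold closed, subst0; simpl; intros. apply closed_subst; auto. Qed.

Lemma closed_cont E : closed_ctx E -> closed (cont E).
Proof.
  intros. unfold cont. rewrite lift_ctx_closed; auto.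
  unfold closed; simpl. apply closed_plug_n; simpl; auto.
Qed.

Lemma closed_cont2 E E' : closed_ctx E' -> closed_ctx E -> closed (cont2 E' E).
Proof.
  intros. unfold cont2. rewrite !lift_ctx_closed; auto.
  unfold closed; simpl. apply closed_plug_n; auto. apply closed_plug_n; simpl; auto.
Qed.

Lemma cont_comp A B : cont (comp A B) = cont2 A B.
Proof. unfold cont, cont2. rewrite lift_ctx_comp, plug_comp. reflexivity. Qed.

Lemma cont2_comp A B C : cont2 A (comp B C) = cont2 (comp A B) C.
Proof. unfold cont2. rewrite !lift_ctx_comp, !plug_comp. reflexivity. Qed.

Inductive contract : term -> term -> Prop :=
| c_beta b v : is_value v -> contract (App (Lam b) v) (subst0 v b)
| c_reset v : is_value v -> contract (Reset v) v
| c_shift E t : pure E -> contract (Reset (plug E (Shift t))) (Reset (subst0 (cont E) t)).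

Lemma step_iff t u : step t u <-> exists F r r', contract r r' /\ t = plug F r /\ u = plug F r'.
Proof.
  split.
  - intros []; do 3 eexists; (split; [|split; reflexivity]); constructor; auto.
  - intros (F & r & r' & Hc & -> & ->). destruct Hc; constructor; auto.
Qed.

Lemma plug_value F x : is_value (plug F x) -> F = Hole /\ is_value x.
Proof. destruct F; simpl; intros [b H]; try discriminate; split; eauto. exists b; auto. Qed.

Lemma shift_not_value t : ~ is_value (Shift t).
Proof. intros [b H]; discriminate. Qed.

Lemma contract_not_value r r' : contract r r' -> ~ is_value r.
Proof. intros [] [b' Hb]; discriminate. Qed.

Ltac pv := repeat match goal with
  | H : is_value (plug ?F ?x) |- _ => apply plug_value in H; destruct H as [? ?]; subst
  | H : Lam ?b = plug ?F ?x |- _ => let Hv := fresh in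
      pose proof (plug_value F x (ex_intro _ b (eq_sym H))) as Hv; clear H; destruct Hv; subst
  | H : plug ?F ?x = Lam ?b |- _ => let Hv := fresh in
      pose proof (plug_value F x (ex_intro _ b H)) as Hv; clear H; destruct Hv; subst
  end.

Ltac fin := match goal with
 | H : is_value (Shift _) |- _ => exfalso; apply (shift_not_value _ H)
 | H : is_value ?r, C : contract ?r _ |- _ => exfalso; apply (contract_not_value _ _ C H)
 end.

Lemma shift_noredex E t : pure E -> forall F r r', contract r r' -> plug E (Shift t) <> plug F r.
Proof.
  induction E; simpl; intros HE F r r' Hc Heq.
  - destruct F; simpl in Heq; try discriminate. subst. inversion Hc.
  - destruct F; simpl in Heq; try discriminate.
    + subst. inversion Hc; subst; pv; fin.
    + injection Heq; intros; eapply IHE; eauto.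
    + injection Heq; intros; pv; fin.
  - destruct F; simpl in Heq; try discriminate.
    + subst. inversion Hc; subst; pv; fin.
    + injection Heq; intros; pv; fin.
    + injection Heq; intros; eapply IHE; eauto.
  - destruct HE.
Qed.

Lemma redex_inner r1 r1' r2 r2' F : contract r1 r1' -> contract r2 r2' -> r1 = plug F r2 -> F = Hole.
Proof.
  intros H1 H2 Heq. destruct F; auto; simpl in Heq; exfalso; subst;
  inversion H1; subst; pv; try fin.
  eapply shift_noredex; eauto.
Qed.

Lemma uniq_decomp F1 : forall F2 r1 r1' r2 r2', contract r1 r1' -> contract r2 r2' ->
  plug F1 r1 = plug F2 r2 -> F1 = F2 /\ r1 = r2.
Proof.
  induction F1; intros F2 r1 r1' r2 r2' H1 H2 Heq.
  - pose proof (redex_inner _ _ _ _ _ H1 H2 Heq); subst; auto.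
  - destruct F2.
    + symmetry in Heq. pose proof (redex_inner _ _ _ _ _ H2 H1 Heq); discriminate.
    + simpl in Heq. injection Heq; intros; subst. destruct (IHF1 _ _ _ _ _ H1 H2 H); subst; auto.
    + simpl in Heq. injection Heq; intros; subst; pv; fin.
    + discriminate.
  - destruct F2.
    + symmetry in Heq. pose proof (redex_inner _ _ _ _ _ H2 H1 Heq); discriminate.
    + simpl in Heq. injection Heq; intros; subst; pv; fin.
    + simpl in Heq. injection Heq; intros; subst. destruct (IHF1 _ _ _ _ _ H1 H2 H0); subst; auto.
    + discriminate.
  - destruct F2; try discriminate.
    + symmetry in Heq. pose proof (redex_inner _ _ _ _ _ H2 H1 Heq); discriminate.
    + simpl in Heq. injection Heq; intros; subst. destruct (IHF1 _ _ _ _ _ H1 H2 H); subst; auto.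
Qed.

Lemma pure_shift_inj E1 : forall E2 t1 t2, pure E1 -> pure E2 ->
  plug E1 (Shift t1) = plug E2 (Shift t2) -> E1 = E2 /\ t1 = t2.
Proof.
  induction E1; intros E2 t1 t2 P1 P2 Heq; destruct E2; simpl in *; try discriminate;
    try contradiction.
  - injection Heq; auto.
  - injection Heq; intros. destruct (IHE1 _ _ _ P1 P2 H); subst; auto.
  - injection Heq; intros; pv; fin.
  - injection Heq; intros; pv; fin.
  - injection Heq; intros. destruct (IHE1 _ _ _ P1 P2 H0); subst; auto.
Qed.

Lemma contract_det r u1 u2 : contract r u1 -> contract r u2 -> u1 = u2.
Proof.
  intros H1 H2. destruct H1; inversion H2; subst; auto; pv; try fin.
  destruct (pure_shift_inj _ _ _ _ H1 H H0); subst; auto.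
Qed.

Lemma step_det t u1 u2 : step t u1 -> step t u2 -> u1 = u2.
Proof.
  intros H1 H2. apply step_iff in H1 as (F1 & r1 & r1' & C1 & -> & ->).
  apply step_iff in H2 as (F2 & r2 & r2' & C2 & Heq & ->).
  destruct (uniq_decomp _ _ _ _ _ _ C1 C2 Heq); subst.
  rewrite (contract_det _ _ _ C1 C2); auto.
Qed.

Lemma step_ctx F t u : step t u -> step (plug F t) (plug F u).
Proof.
  intros H. apply step_iff in H as (F1 & r & r' & C & -> & ->). apply step_iff.
  exists (comp F F1), r, r'. rewrite !plug_comp; auto.
Qed.

Lemma steps_ctx F t u : steps t u -> steps (plug F t) (plug F u).
Proof. induction 1; [constructor|econstructor; eauto using step_ctx]. Qed.

Lemma steps_trans t u w : steps t u -> steps u w -> steps t w.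
Proof. induction 1; intros; auto. econstructor; eauto. Qed.

Lemma pure_shift_stuck E t : pure E -> stuck (plug E (Shift t)).
Proof.
  intros HE. split.
  - intros Hv. destruct (plug_value _ _ Hv). eapply shift_not_value; eauto.
  - intros u Hs. apply step_iff in Hs as (F & r & r' & C & Heq & _).
    eapply shift_noredex; eauto.
Qed.

Lemma value_nostep v u : is_value v -> ~ step v u.
Proof.
  intros [b ->] Hs. apply step_iff in Hs as (F & r & r' & C & Heq & _).
  destruct (plug_value F r (ex_intro _ b (eq_sym Heq))). eapply contract_not_value; eauto.
Qed.

Lemma classify t : closed t -> is_value t \/ (exists u, step t u) \/
  (exists E s, pure E /\ t = plug E (Shift s)).
Proof.
  induction t; unfold closed in *; simpl; intros Hc.
  - lia.
  - left; eexists; eauto.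
  - destruct Hc as [Hc1 Hc2].
    destruct (IHt1 Hc1) as [[b ->]|[[u Hu]|(E & s & HE & ->)]].
    + destruct (IHt2 Hc2) as [Hv|[[u Hu]|(E & s & HE & ->)]].
      * right; left. eexists. apply (step_beta Hole); auto.
      * right; left. eexists. apply (step_ctx (CVal b Hole)); eauto.
      * right; right. exists (CVal b E), s; simpl; auto.
    + right; left. eexists. apply (step_ctx (CFun Hole t2)); eauto.
    + right; right. exists (CFun E t2), s; simpl; auto.
  - right; right. exists Hole, t; simpl; auto.
  - destruct (IHt Hc) as [Hv|[[u Hu]|(E & s & HE & ->)]].
    + right; left. eexists. apply (step_reset Hole); auto.
    + right; left. eexists. apply (step_ctx (CReset Hole)); eauto.
    + right; left. eexists. apply (step_shift Hole); auto.
Qed.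

Lemma stuck_form t : closed t -> stuck t -> exists E s, pure E /\ t = plug E (Shift s).
Proof.
  intros Hc [Hv Hs]. destruct (classify t Hc) as [H|[[u Hu]|H]]; auto.
  - contradiction. - exfalso; eapply Hs; eauto.
Qed.

Lemma contract_closed r r' : contract r r' -> closed r -> closed r'.
Proof.
  intros []; intros Hc.
  - unfold closed in Hc; simpl in Hc; destruct Hc. apply closed_subst0; auto.
  - exact Hc.
  - unfold closed in Hc |- *; simpl in Hc |- *.
    apply (closed_plug0 E (Shift t)) in Hc as [HE Ht].
    apply closed_subst; auto. apply closed_cont; auto.
Qed.

Lemma step_closed t u : step t u -> closed t -> closed u.
Proof.
  intros H Hc. apply step_iff in H as (F & r & r' & C & -> & ->).
  apply closed_plug0 in Hc as [? ?]. apply closed_plug0; split; eauto using contract_closed.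
Qed.

Lemma steps_closed t u : steps t u -> closed t -> closed u.
Proof. induction 1; eauto using step_closed. Qed.

Definition flipr (R : rel) : rel := fun a b => R b a.

Definition Rclosed (R : rel) := forall a b, R a b -> closed a /\ closed b.

Lemma env_Rclosed R : is_env R -> Rclosed R.
Proof. intros H a b Hab. destruct (H a b Hab) as (? & ? & _); auto. Qed.

Ltac tc := first [apply to_var | apply to_lam | apply to_app | apply to_shift | apply to_reset].

Lemma tilde_refl R t : tilde_open R t t.
Proof. induction t; tc; auto. Qed.

Lemma tilde_mono R S a b : (forall x y, R x y -> tilde_open S x y) ->
  tilde_open R a b -> tilde_open S a b.
Proof. intros HRS H; induction H; try tc; auto. Qed.

Lemma tilde_flip R a b : tilde_open R a b -> tilde_open (flipr R) b a.
Proof. induction 1; try tc; auto. apply to_base; auto. Qed.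

Lemma tilde_lift R a b : Rclosed R -> tilde_open R a b ->
  forall d c, tilde_open R (lift d c a) (lift d c b).
Proof.
  intros HR; induction 1; simpl; intros.
  - destruct (HR _ _ H). rewrite !(lift_closed _ 0); auto; try lia. apply to_base; auto.
  - destruct (c <=? n); tc.
  - tc; auto.
  - tc; auto.
  - tc; auto.
  - tc; auto.
Qed.

Lemma tilde_subst R a b : Rclosed R -> tilde_open R a b ->
  forall k v0 v1, tilde_open R v0 v1 -> tilde_open R (subst_at k v0 a) (subst_at k v1 b).
Proof.
  intros HR; induction 1; simpl; intros.
  - destruct (HR _ _ H). rewrite !(subst_closed _ 0); auto; try lia. apply to_base; auto.
  - destruct (n =? k). apply tilde_lift; auto. destruct (k <? n); tc.
  - tc; auto.
  - tc; auto.
  - tc; auto.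
  - tc; auto.
Qed.

Inductive hato (R : rel) : ctx -> ctx -> Prop :=
| ho_hole : hato R Hole Hole
| ho_val : forall b0 b1 F0 F1, hato R F0 F1 -> tilde_open R (Lam b0) (Lam b1) ->
    hato R (CVal b0 F0) (CVal b1 F1)
| ho_fun : forall F0 F1 t0 t1, hato R F0 F1 -> tilde_open R t0 t1 ->
    hato R (CFun F0 t0) (CFun F1 t1)
| ho_reset : forall F0 F1, hato R F0 F1 -> hato R (CReset F0) (CReset F1).

Lemma hat_hato R F0 F1 : hat R F0 F1 -> hato R F0 F1.
Proof. induction 1; constructor; auto; apply H0. Qed.

Lemma hat_closed R F0 F1 : hat R F0 F1 -> closed_ctx F0 /\ closed_ctx F1.
Proof. induction 1; simpl; try tauto; destruct H0 as (_ & ? & ?); tauto. Qed.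

Lemma hato_hat R F0 F1 : hato R F0 F1 -> closed_ctx F0 -> closed_ctx F1 -> hat R F0 F1.
Proof.
  induction 1; simpl; intros.
  - constructor.
  - apply hat_val. apply IHhato; tauto. split; [auto|tauto].
  - apply hat_fun. apply IHhato; tauto. split; [auto|tauto].
  - apply hat_reset; auto.
Qed.

Lemma hato_refl R F : hato R F F.
Proof. induction F; constructor; auto using tilde_refl. Qed.

Lemma hat_refl R F : closed_ctx F -> hat R F F.
Proof. intros; apply hato_hat; auto using hato_refl. Qed.

Lemma hato_mono R S F0 F1 : (forall x y, R x y -> tilde_open S x y) ->
  hato R F0 F1 -> hato S F0 F1.
Proof. intros HRS; induction 1; constructor; eauto using tilde_mono. Qed.

Lemma hato_flip R F0 F1 : hato R F0 F1 -> hato (flipr R) F1 F0.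
Proof. induction 1; constructor; auto using tilde_flip. Qed.

Lemma hat_flip R F0 F1 : hat R F0 F1 -> hat (flipr R) F1 F0.
Proof.
  intros H. destruct (hat_closed _ _ _ H).
  apply hato_hat; auto. apply hato_flip, hat_hato; auto.
Qed.

Lemma hato_plug R F0 F1 x0 x1 : hato R F0 F1 -> tilde_open R x0 x1 ->
  tilde_open R (plug F0 x0) (plug F1 x1).
Proof. induction 1; simpl; intros; auto; [apply to_app|apply to_app|apply to_reset]; auto. Qed.

Lemma hato_comp R A0 A1 B0 B1 : hato R A0 A1 -> hato R B0 B1 ->
  hato R (comp A0 B0) (comp A1 B1).
Proof. induction 1; simpl; intros; try constructor; auto. Qed.

Lemma hato_pure R E0 E1 : hato R E0 E1 -> pure E0 -> pure E1.
Proof. induction 1; simpl; auto. Qed.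

Lemma value_rel R v v1 : is_env R -> tilde_open R v v1 -> is_value v -> is_value v1.
Proof.
  intros HR H [b ->]. inversion H; subst.
  - destruct (HR _ _ H0) as (_ & _ & _ & _ & [[_ ?]|[[Hn _] _]]); auto.
    exfalso; apply Hn; eexists; eauto.
  - eexists; eauto.
Qed.

Lemma env_nostep R a b u : is_env R -> R a b -> step a u -> False.
Proof.
  intros HR Hab Hs. destruct (HR _ _ Hab) as (_ & _ & [Hv|[_ Hst]] & _).
  - eapply value_nostep; eauto.
  - eapply Hst; eauto.
Qed.

Lemma decomp R : is_env R -> forall F x y, tilde_open R (plug F x) y ->
  (exists F1 x1, y = plug F1 x1 /\ hato R F F1 /\ tilde_open R x x1) \/
  (exists Fa Fb Fa1 z, F = comp Fa Fb /\ R (plug Fb x) z /\ y = plug Fa1 z /\ hato R Fa Fa1).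
Proof.
  intros HR. induction F; simpl; intros x y H.
  - left. exists Hole, y. repeat split; auto. constructor.
  - inversion H; subst.
    + right. exists Hole, (CVal t F), Hole, y. repeat split; auto. constructor.
    + assert (Hv : is_value b) by (eapply value_rel; eauto; eexists; eauto).
      destruct Hv as [b1 ->].
      destruct (IHF _ _ H4) as [(F1 & x1 & -> & HF & Hx)|(Fa & Fb & Fa1 & z & -> & Hz & -> & HF)].
      * left. exists (CVal b1 F1), x1. repeat split; auto. constructor; auto.
      * right. exists (CVal t Fa), Fb, (CVal b1 Fa1), z. repeat split; auto. constructor; auto.
  - inversion H; subst.
    + right. exists Hole, (CFun F t), Hole, y. repeat split; auto. constructor.
    + destruct (IHF _ _ H2) as [(F1 & x1 & -> & HF & Hx)|(Fa & Fb & Fa1 & z & -> & Hz & -> & HF)].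
      * left. exists (CFun F1 b'), x1. repeat split; auto. constructor; auto.
      * right. exists (CFun Fa t), Fb, (CFun Fa1 b'), z. repeat split; auto. constructor; auto.
  - inversion H; subst.
    + right. exists Hole, (CReset F), Hole, y. repeat split; auto. constructor.
    + destruct (IHF _ _ H1) as [(F1 & x1 & -> & HF & Hx)|(Fa & Fb & Fa1 & z & -> & Hz & -> & HF)].
      * left. exists (CReset F1), x1. repeat split; auto. constructor; auto.
      * right. exists (CReset Fa), Fb, (CReset Fa1), z. repeat split; auto. constructor; auto.
Qed.

Lemma decomp_shift R E t y : is_env R -> pure E -> tilde_open R (plug E (Shift t)) y ->
 (exists E1 t1, y = plug E1 (Shift t1) /\ pure E1 /\ hato R E E1 /\ tilde_open R t t1) \/
 (exists Ea Eb Ea1 Eb1 t1, E = comp Ea Eb /\ pure Ea /\ pure Eb /\ pure Ea1 /\ pure Eb1 /\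
    R (plug Eb (Shift t)) (plug Eb1 (Shift t1)) /\ y = plug Ea1 (plug Eb1 (Shift t1)) /\
    hato R Ea Ea1).
Proof.
  intros HR HE H.
  assert (Hz : forall Fb z, pure Fb -> R (plug Fb (Shift t)) z ->
            exists Eb1 t1, pure Eb1 /\ z = plug Eb1 (Shift t1)).
  { intros Fb z HFb Hr. destruct (HR _ _ Hr) as (_ & Hcz & _ & _ & [[Hv _]|[_ Hs]]).
    - exfalso. apply (proj1 (pure_shift_stuck Fb t HFb) Hv).
    - apply stuck_form; auto. }
  destruct (decomp R HR E _ _ H) as [(E1 & x1 & -> & HF & Hx)|(Fa & Fb & Fa1 & z & -> & Hr & -> & HF)].
  - inversion Hx; subst.
    + destruct (Hz Hole x1 I H0) as (Eb1 & t1 & HEb1 & ->).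
      right. exists E, Hole, E1, Eb1, t1. rewrite comp_hole_r. repeat split; eauto using hato_pure.
    + left. exists E1, b. repeat split; eauto using hato_pure.
  - apply pure_comp in HE as [HFa HFb].
    destruct (Hz Fb z HFb Hr) as (Eb1 & t1 & HEb1 & ->).
    right. exists Fa, Fb, Fa1, Eb1, t1. repeat split; eauto using hato_pure.
Qed.

Lemma tilde_inv_app R a a' y : tilde_open R (App a a') y ->
  R (App a a') y \/ exists b b', y = App b b' /\ tilde_open R a b /\ tilde_open R a' b'.
Proof. intros H; inversion H; subst; eauto 7. Qed.
Lemma tilde_inv_lam R a y : tilde_open R (Lam a) y ->
  R (Lam a) y \/ exists b, y = Lam b /\ tilde_open R a b.
Proof. intros H; inversion H; subst; eauto. Qed.
Lemma tilde_inv_reset R a y : tilde_open R (Reset a) y ->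
  R (Reset a) y \/ exists b, y = Reset b /\ tilde_open R a b.
Proof. intros H; inversion H; subst; eauto. Qed.

Definition incl (G E' : rel) := forall a b, G a b -> tilde E' a b.

Definition caseI X0 G T0 T1 := is_env G /\ closed T0 /\ closed T1 /\
  exists E', X_env X0 E' /\ incl G E' /\ tilde_open E' T0 T1.
Definition caseII X0 G T0 T1 := is_env G /\ closed T0 /\ closed T1 /\
  exists E' F0 F1 s0 s1, incl G E' /\ T0 = plug F0 s0 /\ T1 = plug F1 s1 /\
    hat E' F0 F1 /\ X_tri X0 E' s0 s1.
Definition Xp X0 : env_relation :=
  {| X_env := fun G => is_env G /\ exists E', X_env X0 E' /\ incl G E';
     X_tri := fun G T0 T1 => caseI X0 G T0 T1 \/ caseII X0 G T0 T1 |}.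

Lemma mkI X0 G T0 T1 E' : is_env G -> closed T0 -> closed T1 -> X_env X0 E' -> incl G E' ->
  tilde_open E' T0 T1 -> caseI X0 G T0 T1.
Proof. intros; unfold caseI; split; [auto|split; [auto|split; [auto|exists E'; auto]]]. Qed.

Lemma mkII X0 G E' F0 F1 s0 s1 : is_env G -> closed (plug F0 s0) -> closed (plug F1 s1) ->
  incl G E' -> hat E' F0 F1 -> X_tri X0 E' s0 s1 -> caseII X0 G (plug F0 s0) (plug F1 s1).
Proof.
  intros; unfold caseII; split; [auto|split; [auto|split; [auto|]]].
  exists E', F0, F1, s0, s1; auto.
Qed.

Lemma incl_mono G E' E'' : incl G E' -> (forall a b, E' a b -> E'' a b) -> incl G E''.
Proof.
  intros H Hs a b Hab. destruct (H a b Hab) as (Ht & ? & ?). split; auto.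
  eapply tilde_mono; [|eauto]. intros; apply to_base; auto.
Qed.

Lemma incl_tilde G E' a b : incl G E' -> tilde_open G a b -> tilde_open E' a b.
Proof. intros H; apply tilde_mono. intros; apply H; auto. Qed.

Lemma env_add_ok G E' a b : is_env G -> incl G E' -> closed a -> closed b -> tilde_open E' a b ->
  ((is_value a /\ is_value b) \/ (stuck a /\ stuck b)) ->
  is_env (env_add G a b) /\ incl (env_add G a b) E'.
Proof.
  intros HG Hi Ha Hb Ht Hn. split.
  - intros x y [H|[-> ->]]; [apply HG; auto|].
    unfold normal_form. destruct Hn as [[]|[]]; repeat split; auto.
  - intros x y [H|[-> ->]]; [apply Hi; auto|]. repeat split; auto.
Qed.

Lemma IIred X0 G E' F0 F1 s0 s1 : env_bisimulation X0 -> is_env G -> incl G E' ->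
  hat E' F0 F1 -> X_tri X0 E' s0 s1 -> (is_value s0 \/ stuck s0) ->
  exists T1'', steps (plug F1 s1) T1'' /\ caseI X0 G (plug F0 s0) T1''.
Proof.
  intros HB HG Hi Hh Ht Hnf. pose proof HB as HB'. destruct HB' as [[HXe HXt] [H1 H2]].
  destruct (HXt _ _ _ Ht) as (HE' & Hc0 & Hc1).
  destruct (H1 _ _ _ Ht) as (_ & Hb & Hc & _).
  destruct (hat_closed _ _ _ Hh) as [HF0 HF1].
  destruct Hnf as [Hv|Hs].
  - destruct (Hb Hv) as (v1 & Hst & Hv1 & Henv).
    destruct (HXe _ Henv s0 v1 (or_intror (conj eq_refl eq_refl))) as (_ & Hcv1 & _).
    exists (plug F1 v1). split. apply steps_ctx; auto.
    split; [auto|split; [apply closed_plug0; auto|split; [apply closed_plug0; auto|]]].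
    exists (env_add E' s0 v1). split; auto. split. eapply incl_mono; eauto. intros; left; auto.
    apply hato_plug. eapply hato_mono; [|apply hat_hato; eauto]. intros; apply to_base; left; auto.
    apply to_base; right; auto.
  - destruct (Hc Hs) as (v1 & Hst & Hv1 & Henv).
    destruct (HXe _ Henv s0 v1 (or_intror (conj eq_refl eq_refl))) as (_ & Hcv1 & _).
    exists (plug F1 v1). split. apply steps_ctx; auto.
    split; [auto|split; [apply closed_plug0; auto|split; [apply closed_plug0; auto|]]].
    exists (env_add E' s0 v1). split; auto. split. eapply incl_mono; eauto. intros; left; auto.
    apply hato_plug. eapply hato_mono; [|apply hat_hato; eauto]. intros; apply to_base; left; auto.
    apply to_base; right; auto.
Qed.

Lemma closed_app a b : closed (App a b) -> closed a /\ closed b.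
Proof. unfold closed; simpl; auto. Qed.
Lemma closed_reset a : closed (Reset a) -> closed a.
Proof. unfold closed; simpl; auto. Qed.

Lemma forwardI X0 G T0 T1 : env_bisimulation X0 -> caseI X0 G T0 T1 ->
 (forall T0', step T0 T0' -> exists T1', steps T1 T1' /\ X_tri (Xp X0) G T0' T1') /\
 (is_value T0 -> exists v1, steps T1 v1 /\ is_value v1 /\ X_env (Xp X0) (env_add G T0 v1)) /\
 (stuck T0 -> exists T1', steps T1 T1' /\ stuck T1' /\ X_env (Xp X0) (env_add G T0 T1')).
Proof.
  intros HB (HG & Hc0 & Hc1 & E' & HXE & Hi & Ht).
  pose proof HB as HB'. destruct HB' as [[HXe HXt] [H1 H2]].
  pose proof (HXe _ HXE) as HE'. pose proof (env_Rclosed _ HE') as HRc.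
  destruct (H2 _ HXE) as [H2a H2b].
  split; [|split].
  - intros T0' Hs. pose proof (step_closed _ _ Hs Hc0) as Hc0'.
    apply step_iff in Hs as (F & r & r' & C & -> & ->).
    apply closed_plug0 in Hc0 as [HF Hr].
    destruct (decomp E' HE' F r T1 Ht) as
      [(F1 & x1 & -> & HF1 & Hx)|(Fa & Fb & Fa1 & z & -> & Hz & -> & HFa)].
    2: { exfalso. eapply (env_nostep E' _ _ (plug Fb r')); eauto.
         apply step_iff; exists Fb, r, r'; auto. }
    pose proof Hc1 as Hc1'.
    apply closed_plug0 in Hc1 as [HF1c Hx1].
    assert (Hh : hat E' F F1) by (apply hato_hat; auto).
    destruct C as [b v Hv | v Hv | E t HE].
    + destruct (tilde_inv_app _ _ _ _ Hx) as [Hb|(a1 & v1 & -> & Ha & Hvv)].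
      { exfalso. eapply (env_nostep E' _ _ (subst0 v b)); eauto. apply (step_beta Hole); auto. }
      apply closed_app in Hx1 as [Ha1 Hv1]. apply closed_app in Hr as [Hb0 Hv0].
      assert (Hvv1 : is_value v1) by (eapply value_rel; eauto).
      destruct (tilde_inv_lam _ _ _ Ha) as [Hb0'|(b1 & -> & Hbb)].
      * assert (Hva : is_value a1) by (apply (value_rel E' (Lam b) a1 HE' (to_base _ _ _ Hb0') (ex_intro _ b eq_refl))).
        destruct Hva as [b1 ->].
        pose proof (H2a b b1 v v1 Hb0' Hv Hvv1 (conj Hvv (conj Hv0 Hv1))) as Htri.
        exists (plug F1 (subst0 v1 b1)). split.
        { apply (steps_step _ _ _ (step_beta F1 b1 v1 Hvv1)); constructor. }
        right. apply (mkII _ _ E'); auto.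
        { apply closed_plug0; split; auto. apply closed_subst0; auto. }
      * exists (plug F1 (subst0 v1 b1)). split.
        { apply (steps_step _ _ _ (step_beta F1 b1 v1 Hvv1)); constructor. }
        left. apply (mkI _ _ _ _ E'); auto.
        { apply closed_plug0; split; auto. apply closed_subst0; auto. }
        apply hato_plug; auto.
        unfold subst0. apply tilde_subst; auto.
    + destruct (tilde_inv_reset _ _ _ Hx) as [Hb|(v1 & -> & Hvv)].
      { exfalso. eapply (env_nostep E' _ _ v); eauto. apply (step_reset Hole); auto. }
      assert (Hvv1 : is_value v1) by (eapply value_rel; eauto).
      exists (plug F1 v1). split.
      { apply (steps_step _ _ _ (step_reset F1 v1 Hvv1)); constructor. }
      left. apply (mkI _ _ _ _ E'); auto;
        try (apply closed_plug0; split; auto; apply closed_reset; auto); apply hato_plug; auto.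
    + destruct (tilde_inv_reset _ _ _ Hx) as [Hb|(y1 & -> & Hy)].
      { exfalso. eapply (env_nostep E' _ _ _); eauto. apply (step_shift Hole); auto. }
      apply closed_reset in Hr. apply closed_reset in Hx1.
      pose proof Hr as Hr'. apply closed_plug0 in Hr' as [HEc Htc].
      destruct (decomp_shift E' E t y1 HE' HE Hy) as
        [(E1 & t1 & -> & HE1 & HEE & Htt)|
         (Ea & Eb & Ea1 & Eb1 & t1 & -> & HEa & HEb & HEa1 & HEb1 & Hst & -> & HEaa)].
      * apply closed_plug0 in Hx1 as [HE1c Ht1c].
        exists (plug F1 (Reset (subst0 (cont E1) t1))).
        assert (Hs1 : step (plug F1 (Reset (plug E1 (Shift t1))))
                         (plug F1 (Reset (subst0 (cont E1) t1)))) by (apply step_shift; auto).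
        split. { eapply steps_step; [exact Hs1|constructor]. }
        left. apply (mkI _ _ _ _ E'); auto. { eapply step_closed; eauto. }
        apply hato_plug; auto. apply to_reset.
        unfold subst0. apply tilde_subst; auto.
        unfold cont. rewrite !lift_ctx_closed; auto. apply to_lam, to_reset, hato_plug; auto.
        apply to_var.
      * rewrite plug_comp in Hr. apply closed_plug0 in Hr as [HEac _].
        apply closed_plug0 in Hx1 as [HEa1c _].
        pose proof (H2b Eb Eb1 t t1 Ea Ea1 HEb HEb1 Hst HEa HEa1 (hato_hat _ _ _ HEaa HEac HEa1c))
          as Htri.
        assert (Hs1 : step (plug F1 (Reset (plug Ea1 (plug Eb1 (Shift t1)))))
                         (plug F1 (Reset (subst0 (cont (comp Ea1 Eb1)) t1)))).
        { rewrite <- plug_comp. apply step_shift. apply pure_comp; auto. }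
        exists (plug F1 (Reset (subst0 (cont (comp Ea1 Eb1)) t1))).
        split. { eapply steps_step; [exact Hs1|constructor]. }
        pose proof (step_closed _ _ Hs1 Hc1') as Hc1''.
        rewrite !cont_comp in *. right. apply (mkII _ _ E'); auto.
  - intros Hv. assert (Hv1 : is_value T1) by (eapply value_rel; eauto).
    exists T1. split; [constructor|]. split; auto.
    destruct (env_add_ok G E' T0 T1 HG Hi Hc0 Hc1 Ht (or_introl (conj Hv Hv1))).
    split; auto. exists E'; auto.
  - intros Hs. destruct (stuck_form T0 Hc0 Hs) as (E & t & HE & ->).
    assert (Hs1 : stuck T1).
    { destruct (decomp_shift E' E t T1 HE' HE Ht) as
        [(E1 & t1 & -> & HE1 & HEE & Htt)|
         (Ea & Eb & Ea1 & Eb1 & t1 & -> & HEa & HEb & HEa1 & HEb1 & Hst & -> & HEaa)].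
      - apply pure_shift_stuck; auto.
      - rewrite <- plug_comp. apply pure_shift_stuck. apply pure_comp; auto. }
    exists T1. split; [constructor|]. split; auto.
    destruct (env_add_ok G E' _ T1 HG Hi Hc0 Hc1 Ht (or_intror (conj Hs Hs1))).
    split; auto. exists E'; auto.
Qed.

Lemma forward X0 G T0 T1 : env_bisimulation X0 -> X_tri (Xp X0) G T0 T1 ->
 (forall T0', step T0 T0' -> exists T1', steps T1 T1' /\ X_tri (Xp X0) G T0' T1') /\
 (is_value T0 -> exists v1, steps T1 v1 /\ is_value v1 /\ X_env (Xp X0) (env_add G T0 v1)) /\
 (stuck T0 -> exists T1', steps T1 T1' /\ stuck T1' /\ X_env (Xp X0) (env_add G T0 T1')).
Proof.
  intros HB [HI|HII]. { apply forwardI; auto. }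
  pose proof HB as HB'. destruct HB' as [[HXe HXt] [H1 H2]].
  destruct HII as (HG & Hc0 & Hc1 & E' & F0 & F1 & s0 & s1 & Hi & -> & -> & Hh & Ht).
  destruct (HXt _ _ _ Ht) as (HE' & Hcs0 & Hcs1).
  assert (Hnf : (is_value s0 \/ stuck s0) \/ exists u, step s0 u).
  { destruct (classify s0 Hcs0) as [Hv|[Hu|(E & s & HE & ->)]]; auto.
    left; right; apply pure_shift_stuck; auto. }
  destruct Hnf as [Hnf|[u Hu]].
  - destruct (IIred X0 G E' F0 F1 s0 s1 HB HG Hi Hh Ht Hnf) as (T1'' & Hst & HI).
    destruct (forwardI _ _ _ _ HB HI) as (Fa & Fb & Fc).
    split; [|split].
    + intros T0' Hs. destruct (Fa T0' Hs) as (T1' & ? & ?). exists T1'.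
      split; eauto using steps_trans.
    + intros Hv. destruct (Fb Hv) as (T1' & ? & ? & ?). exists T1'.
      split; eauto using steps_trans.
    + intros Hv. destruct (Fc Hv) as (T1' & ? & ? & ?). exists T1'.
      split; eauto using steps_trans.
  - pose proof (step_ctx F0 _ _ Hu) as Hsu.
    split; [|split].
    + intros T0' Hs. rewrite (step_det _ _ _ Hs Hsu).
      destruct (H1 _ _ _ Ht) as (Ha & _). destruct (Ha u Hu) as (s1' & Hst & Ht').
      exists (plug F1 s1'). split. { apply steps_ctx; auto. }
      right. apply (mkII _ _ E'); auto.
      * eapply step_closed; eauto.
      * apply (steps_closed (plug F1 s1)); [apply steps_ctx; auto|auto].
    + intros Hv; exfalso; eapply value_nostep; eauto.
    + intros [_ Hs]; exfalso; eapply Hs; eauto.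
Qed.

Lemma env_clause X0 G : env_bisimulation X0 -> X_env (Xp X0) G ->
  (forall b0 b1 v0 v1, G (Lam b0) (Lam b1) -> is_value v0 -> is_value v1 ->
        tilde G v0 v1 -> X_tri (Xp X0) G (subst0 v0 b0) (subst0 v1 b1)) /\
  (forall E0 E1 s0 s1 E0' E1', pure E0 -> pure E1 ->
        G (plug E0 (Shift s0)) (plug E1 (Shift s1)) ->
        pure E0' -> pure E1' -> hat G E0' E1' ->
        X_tri (Xp X0) G (Reset (subst0 (cont2 E0' E0) s0))
                  (Reset (subst0 (cont2 E1' E1) s1))).
Proof.
  intros HB (HG & E' & HXE & Hi).
  pose proof HB as HB'. destruct HB' as [[HXe HXt] [H1 H2]].
  pose proof (HXe _ HXE) as HE'. pose proof (env_Rclosed _ HE') as HRc.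
  destruct (H2 _ HXE) as [H2a H2b].
  split.
  - intros b0 b1 v0 v1 Hb Hv0 Hv1 (Hvv & Hcv0 & Hcv1).
    destruct (Hi _ _ Hb) as (Hbb & Hcb0 & Hcb1).
    assert (Hc0 : closed (subst0 v0 b0)) by (apply closed_subst0; auto).
    assert (Hc1 : closed (subst0 v1 b1)) by (apply closed_subst0; auto).
    assert (Hvv' : tilde_open E' v0 v1) by (eapply incl_tilde; eauto).
    destruct (tilde_inv_lam _ _ _ Hbb) as [Hb'|(b1' & Heq & Hbb')].
    + right. apply (mkII X0 G E' Hole Hole); auto. constructor.
      apply H2a; auto. split; auto.
    + injection Heq; intros; subst. left. apply (mkI _ _ _ _ E'); auto.
      unfold subst0. apply tilde_subst; auto.
  - intros E0 E1 s0 s1 E0' E1' HE0 HE1 Hs HE0' HE1' Hh.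
    destruct (Hi _ _ Hs) as (Hss & Hcs0 & Hcs1).
    destruct (hat_closed _ _ _ Hh) as [HE0'c HE1'c].
    pose proof Hcs0 as Hcs0'. apply closed_plug0 in Hcs0' as [HE0c Hsh0].
    pose proof Hcs1 as Hcs1'. apply closed_plug0 in Hcs1' as [HE1c Hsh1].
    assert (Hh' : hato E' E0' E1').
    { eapply hato_mono; [|apply hat_hato; eauto]. intros x y Hxy. apply (Hi _ _ Hxy). }
    assert (Hc0 : closed (Reset (subst0 (cont2 E0' E0) s0))).
    { apply (closed_subst0 s0); auto. apply closed_cont2; auto. }
    assert (Hc1 : closed (Reset (subst0 (cont2 E1' E1) s1))).
    { apply (closed_subst0 s1); auto. apply closed_cont2; auto. }
    destruct (decomp_shift E' E0 s0 _ HE' HE0 Hss) as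
        [(E1a & t1 & Heq & HE1a & HEE & Htt)|
         (Ea & Eb & Ea1 & Eb1 & t1 & -> & HEa & HEb & HEa1 & HEb1 & Hst & Heq & HEaa)].
    + destruct (pure_shift_inj _ _ _ _ HE1 HE1a Heq); subst.
      left. apply (mkI _ _ _ _ E'); auto. apply to_reset.
      unfold subst0. apply tilde_subst; auto.
      unfold cont2. rewrite !lift_ctx_closed; auto. apply to_lam, to_reset, hato_plug; auto.
      apply hato_plug; auto. apply to_var.
    + rewrite <- plug_comp in Heq.
      destruct (pure_shift_inj _ _ _ _ HE1 (proj2 (pure_comp _ _) (conj HEa1 HEb1)) Heq); subst.
      apply closed_ctx_comp in HE0c as [HEac _]. apply closed_ctx_comp in HE1c as [HEa1c _].
      assert (Hh2 : hat E' (comp E0' Ea) (comp E1' Ea1)).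
      { apply hato_hat. apply hato_comp; auto. apply closed_ctx_comp; auto.
        apply closed_ctx_comp; auto. }
      pose proof (H2b Eb Eb1 s0 t1 (comp E0' Ea) (comp E1' Ea1) HEb HEb1 Hst
                    (proj2 (pure_comp _ _) (conj HE0' HEa))
                    (proj2 (pure_comp _ _) (conj HE1' HEa1)) Hh2) as Htri.
      rewrite !cont2_comp. right. apply (mkII X0 G E' Hole Hole); auto.
      * simpl. rewrite <- cont2_comp; auto.
      * simpl. rewrite <- cont2_comp; auto.
      * constructor.
Qed.

Definition flipX (X : env_relation) : env_relation :=
  {| X_env := fun E => X_env X (flipr E); X_tri := fun E a b => X_tri X (flipr E) b a |}.

Lemma flip_env_add E a b : flipr (env_add E a b) = env_add (flipr E) b a.
Proof.
  apply functional_extensionality; intro x; apply functional_extensionality; intro y.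
  apply propositional_extensionality. unfold flipr, env_add; tauto.
Qed.

Lemma is_env_flip E : is_env E -> is_env (flipr E).
Proof.
  intros H a b Hab. destruct (H b a Hab) as (? & ? & ? & ? & [[]|[]]); repeat split; tauto.
Qed.

Lemma tilde_flipc R a b : tilde R a b -> tilde (flipr R) b a.
Proof. intros (? & ? & ?); split; auto using tilde_flip. Qed.

Lemma flip_bisim X : env_bisimulation X -> env_bisimulation (flipX X).
Proof.
  intros [[He Ht] [H1 H2]]. split; [split|split].
  - intros E HE. exact (is_env_flip _ (He _ HE)).
  - intros E a b Hab. destruct (Ht _ _ _ Hab) as (? & ? & ?).
    apply is_env_flip in H. auto.
  - intros E t0 t1 Htr. simpl in *.
    destruct (H1 _ _ _ Htr) as (a & b & c & d & e & f).
    split; [|split; [|split; [|split; [|split]]]].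
    + exact d.
    + intros Hv. destruct (e Hv) as (v0 & ? & ? & ?). exists v0. rewrite flip_env_add. auto.
    + intros Hv. destruct (f Hv) as (v0 & ? & ? & ?). exists v0. rewrite flip_env_add. auto.
    + exact a.
    + intros Hv. destruct (b Hv) as (v0 & ? & ? & ?). exists v0. rewrite flip_env_add. auto.
    + intros Hv. destruct (c Hv) as (v0 & ? & ? & ?). exists v0. rewrite flip_env_add. auto.
  - intros E HE. simpl in *. destruct (H2 _ HE) as [Ha Hb]. split.
    + intros b0 b1 v0 v1 Hb0 Hv0 Hv1 Hvv. apply Ha; auto. apply tilde_flipc; auto.
    + intros E0 E1 s0 s1 E0' E1' P0 P1 Hs P0' P1' Hh. apply Hb; auto. apply hat_flip; auto.
Qed.

Lemma Xp_flip X0 G a b : X_tri (Xp X0) G a b -> X_tri (Xp (flipX X0)) (flipr G) b a.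
Proof.
  intros [(HG & Hc0 & Hc1 & E' & HXE & Hi & Ht)|
          (HG & Hc0 & Hc1 & E' & F0 & F1 & s0 & s1 & Hi & -> & -> & Hh & Ht)].
  - left. apply (mkI _ _ _ _ (flipr E')); auto using is_env_flip, tilde_flip.
    intros x y Hxy. apply tilde_flipc, Hi; auto.
  - right. apply (mkII _ _ (flipr E')); auto using is_env_flip, hat_flip.
    intros x y Hxy. apply tilde_flipc, Hi; auto.
Qed.

Lemma Xp_unflip X0 H a b : X_tri (Xp (flipX X0)) H b a -> X_tri (Xp X0) (flipr H) a b.
Proof.
  intros [(HG & Hc0 & Hc1 & E' & HXE & Hi & Ht)|
          (HG & Hc0 & Hc1 & E' & F0 & F1 & s0 & s1 & Hi & -> & -> & Hh & Ht)].
  - left. apply (mkI _ _ _ _ (flipr E')); auto using is_env_flip, tilde_flip.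
    intros x y Hxy. apply tilde_flipc, Hi; auto.
  - right. apply (mkII _ _ (flipr E')); auto using is_env_flip, hat_flip.
    intros x y Hxy. apply tilde_flipc, Hi; auto.
Qed.

Lemma Xp_env_unflip X0 H : X_env (Xp (flipX X0)) H -> X_env (Xp X0) (flipr H).
Proof.
  intros (HH & E' & HXE & Hi). split; auto using is_env_flip.
  exists (flipr E'). split; auto. intros x y Hxy. apply tilde_flipc, Hi; auto.
Qed.

Lemma Xp_bisim X0 : env_bisimulation X0 -> env_bisimulation (Xp X0).
Proof.
  intros HB. pose proof (flip_bisim _ HB) as HBf. split; [split|split].
  - intros G [HG _]; auto.
  - intros G a b [(HG & Hc0 & Hc1 & _)|(HG & Hc0 & Hc1 & _)]; auto.
  - intros G T0 T1 Htr.
    destruct (forward _ _ _ _ HB Htr) as (a & b & c).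
    destruct (forward _ _ _ _ HBf (Xp_flip _ _ _ _ Htr)) as (d & e & f).
    split; [exact a|split; [exact b|split; [exact c|split; [|split]]]].
    + intros T1' Hs. destruct (d T1' Hs) as (T0' & ? & ?). exists T0'. split; auto.
      apply (Xp_unflip _ (flipr G)); auto.
    + intros Hv. destruct (e Hv) as (v0 & ? & ? & Hen). exists v0. split; auto. split; auto.
      apply Xp_env_unflip in Hen. rewrite flip_env_add in Hen. exact Hen.
    + intros Hv. destruct (f Hv) as (v0 & ? & ? & Hen). exists v0. split; auto. split; auto.
      apply Xp_env_unflip in Hen. rewrite flip_env_add in Hen. exact Hen.
  - intros G HG. apply env_clause; auto.
Qed.

Theorem lemma8 (E : rel) (t0 t1 : term) :
  is_env E -> closed t0 -> closed t1 ->
  bisimilar E t0 t1 ->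
  forall F : ctx, closed_ctx F -> bisimilar E (plug F t0) (plug F t1).
Proof.
  intros HE Hc0 Hc1 [X0 [HB Ht]] F HF.
  exists (Xp X0). split. { apply Xp_bisim; auto. }
  right. apply (mkII X0 E E F F t0 t1); auto.
  - apply closed_plug0; auto.
  - apply closed_plug0; auto.
  - intros a b Hab. destruct (HE a b Hab) as (? & ? & _). split; auto. apply to_base; auto.
  - apply hat_refl; auto.
Qed.
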